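(* Let $\mathcal G$ be a finite, connected, simple bipartite graph with $N_{\mathcal V}$ vertices, each edge identified with $[0,1]$, and let $\mathcal L$ be the self-adjoint operator on $L^2(\mathcal G)$ described in the context. Then the eigenvalues $\lambda$ of $\mathcal L$ satisfy: (i) there are precisely $N_{\mathcal V}-2$ eigenvalues with $0<\lambda<\pi^2$, counted with multiplicity; (ii) there are precisely $N_{\mathcal V}-2$ eigenvalues with $\pi^2<\lambda<(2\pi)^2$, counted with multiplicity, and these have the form $\lambda=(2\pi-\sqrt{\mu})^2$ for $\mu$ an eigenvalue of $\mathcal L$ with $0<\mu<\pi^2$; moreover $\lambda$ and $\mu$ have the same multiplicity.
   Context: $L^2(\mathcal G)=\bigoplus_{e}L^2(e)$ with each $L^2(e)=L^2[0,1]$. The operator $\mathcal L$ acts by $-d^2/dx^2$ on each edge, with domain consisting of $f\in L^2(\mathcal G)$ that are continuous on $\mathcal G$, continuously differentiable on each edge with $f_e'$ absolutely continuous and $f''\in L^2(\mathcal G)$, and satisfying at every vertex $v$ the condition $\sum_{e\sim v}\partial_\nu f_e(v)=0$, where the sum is over edges incident on $v$ and $\partial_\nu$ is the outward derivative in the local coordinate identifying $e$ with $[0,1]$ and $v$ with $0$. *)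

(* Defs.v *)
From HB Require Import structures.
From mathcomp Require Import all_boot all_order all_algebra.
From mathcomp Require Import all_classical all_reals all_analysis.
Set Implicit Arguments. Unset Strict Implicit. Unset Printing Implicit Defensive.
Import Order.TTheory GRing.Theory Num.Theory.
Import numFieldNormedType.Exports.
Local Open Scope classical_set_scope.
Local Open Scope ring_scope.

(* A function on the metric graph is encoded as
   f : T -> T -> R -> R, where for adjacent u v, f u v x is the value at the
   point at distance x from u on the edge uv (local coordinate identifying
   the edge with [0,1] and u with 0). *)

Section QG.
Variables (R : realType) (T : finType) (e : rel T).

Definition gfun := T -> T -> R -> R.

Definition has_outder (f : gfun) (u v : T) (d : R) : Prop :=
  (fun h : R => (f u v h - f u v 0) / h) @ 0^'+ --> d.

(* f lies in the domain of the operator L and satisfies L f = lam f,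
   i.e. -f_e'' = lam f_e on every edge, plus continuity at the vertices
   and the Kirchhoff (standard) vertex conditions. *)
Definition in_eigspace (lam : R) (f : gfun) : Prop :=
  [/\ (forall u v, e u v -> forall x, 0 <= x <= 1 -> f u v x = f v u (1 - x)),
      (forall u v, e u v -> {within `[0, 1], continuous (f u v)}),
      (forall u v, e u v -> forall x, 0 < x < 1 ->
          [/\ derivable (f u v) x 1, derivable (derive1 (f u v)) x 1 &
              - derive1 (derive1 (f u v)) x = lam * f u v x]),
      (forall u v w, e u v -> e u w -> f u v 0 = f u w 0) &
      (exists d : T -> T -> R,
          (forall u v, e u v -> has_outder f u v (d u v)) /\
          (forall u, \sum_(v | e u v) d u v = 0))].

Definition gnonzero (f : gfun) : Prop :=
  exists u v x, [/\ e u v, 0 <= x <= 1 & f u v x != 0].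

Definition qg_eigenvalue (lam : R) : Prop :=
  exists f, in_eigspace lam f /\ gnonzero f.

Definition lin_indep (m : nat) (F : 'I_m -> gfun) : Prop :=
  forall c : 'I_m -> R,
    (forall u v x, e u v -> 0 <= x <= 1 -> \sum_(i < m) c i * F i u v x = 0) ->
    forall i, c i = 0.

Definition qg_mult (lam : R) (m : nat) : Prop :=
  (exists F : 'I_m -> gfun, (forall i, in_eigspace lam (F i)) /\ lin_indep F) /\
  (forall F : 'I_m.+1 -> gfun, (forall i, in_eigspace lam (F i)) -> ~ lin_indep F).

Definition qg_count (a b : R) (n : nat) : Prop :=
  exists s : seq (R * nat),
    [/\ uniq (map fst s),
        (forall x, (a < x < b /\ qg_eigenvalue x) <-> x \in map fst s),
        (forall p, p \in s -> qg_mult p.1 p.2) &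
        (\sum_(p <- s) p.2)%N = n].

End QG.

(* Main.v *)
Require Import Defs.
From HB Require Import structures.
From mathcomp Require Import all_boot all_order all_algebra.
From mathcomp Require Import all_classical all_reals all_analysis.
From mathcomp Require Import complex.
From mathcomp Require Import sesquilinear spectral.
From mathcomp Require Import ring lra.
Import Order.TTheory GRing.Theory Num.Theory.
Import numFieldNormedType.Exports.
Set Implicit Arguments. Unset Strict Implicit. Unset Printing Implicit Defensive.
Local Open Scope classical_set_scope.
Local Open Scope ring_scope.

Section LA.
Variables (R : realType) (T : finType) (e : rel T).
Hypothesis esym : symmetric e.

Definition ev (i : 'I_#|T|) : T := enum_val i.
Definition degR u : R := \sum_(v | e u v) 1.
Definition KC (c : R) (F : T -> R) := forall u, \sum_(v | e u v) (F v - c * F u) = 0.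
Definition Madj : 'M[R]_#|T| := \matrix_(i,j) (e (ev i) (ev j))%:R.
Definition Mdeg : 'M[R]_#|T| := diag_mx (\row_i degR (ev i)).
Definition MK c := Madj - c *: Mdeg.
Definition dimK c := (#|T| - \rank (MK c))%N.
Definition vecT (F : T -> R) : 'rV[R]_#|T| := \row_i F (ev i).

Lemma sum_ev (G : T -> R) : \sum_(i < #|T|) G (ev i) = \sum_u G u.
Proof.
have := big_enum_val (op := +%R) (A := T) G.
rewrite /ev => <-; by apply: eq_bigl => u; rewrite inE.
Qed.

Lemma vecT_MK c F j : (vecT F *m MK c) 0 j =
   \sum_(v | e (ev j) v) (F v - c * F (ev j)).
Proof.
rewrite !mxE.
under eq_bigr => i _ do rewrite !mxE.
rewrite (eq_bigr (fun i => F (ev i) * (e (ev i) (ev j))%:R -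
   (if i == j then c * degR (ev j) * F (ev j) else 0))); last first.
  by move=> i _; case: eqP => [->|ne] /=; rewrite ?mulr1n ?mulr0n ?mulr0 ?subr0 //; ring.
rewrite sumrB -big_mkcond big_pred1_eq (sum_ev (fun u => F u * (e u (ev j))%:R)).
rewrite sumrB; congr (_ - _).
  rewrite [RHS]big_mkcond /=; apply: eq_bigr => u _; rewrite esym.
  by case: (e (ev j) u) => /=; rewrite ?mulr1 ?mulr0.
by rewrite /degR mulr_sumr mulr_suml; apply: eq_bigr => u _; rewrite mulr1.
Qed.


Definition indepT m (G : 'I_m -> T -> R) :=
  forall a : 'I_m -> R, (forall u, \sum_i a i * G i u = 0) -> forall i, a i = 0.

Lemma KC_vecP c F : KC c F <-> vecT F *m MK c = 0.
Proof.
split.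
  by move=> H; apply/rowP => j; rewrite vecT_MK mxE; apply: H.
move=> /rowP H u; have := H (enum_rank u).
by rewrite vecT_MK mxE /ev enum_rankK.
Qed.

Lemma mx_rowvec m (G : 'I_m -> T -> R) (B : 'M[R]_(m, #|T|)) :
  (forall i u, B i (enum_rank u) = G i u) -> forall i, row i B = vecT (G i).
Proof. by move=> HB i; apply/rowP => j; rewrite !mxE -HB /ev enum_valK. Qed.

Lemma mx_indep m (G : 'I_m -> T -> R) (B : 'M[R]_(m, #|T|)) :
  (forall i u, B i (enum_rank u) = G i u) -> indepT G <-> row_free B.
Proof.
move=> HB; split.
  move=> Hi; rewrite -kermx_eq0; apply/eqP/row_matrixP => k.
  rewrite row0; set r := row k _.
  have rB : r *m B = 0 by rewrite /r -row_mul mulmx_ker row0.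
  apply/rowP => i; rewrite [RHS]mxE.
  suff : r 0 i = 0 by rewrite mxE.
  apply: (Hi (fun i => r 0 i)) => u.
  move/rowP: rB => /(_ (enum_rank u)); rewrite !mxE => H; apply: etrans H.
  by apply: eq_bigr => l _; rewrite HB.
move=> Hf a Ha i.
have : (\row_i a i) *m B = 0.
  apply/rowP => j; rewrite !mxE -[RHS](Ha (ev j)).
  by apply: eq_bigr => l _; rewrite mxE -HB /ev enum_valK.
rewrite -(mul0mx 1 B) => /(row_free_inj Hf) /rowP /(_ i).
by rewrite !mxE.
Qed.

Lemma LA_mult c m : (exists G : 'I_m -> T -> R, (forall i, KC c (G i)) /\ indepT G)
   <-> (m <= dimK c)%N.
Proof.
rewrite /dimK -mxrank_ker; split.
  move=> [G [HK Hi]].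
  pose B := \matrix_(i, j) G i (ev j).
  have HB : forall i u, B i (enum_rank u) = G i u by move=> i u; rewrite mxE /ev enum_rankK.
  have /(mx_indep HB) Hf := Hi.
  have BK : (B <= kermx (MK c))%MS.
    apply/sub_kermxP/row_matrixP => i; rewrite row_mul row0 (mx_rowvec HB).
    exact/KC_vecP.
  by rewrite -(eqP Hf); apply: mxrankS.
move=> Hm.
set K := kermx (MK c) in Hm *.
pose B : 'M[R]_(m, #|T|) := pid_mx m *m row_base K.
have rB : \rank B = m by rewrite mxrankMfree ?row_base_free // rank_pid_mx.
have BK : (B <= K)%MS.
  by apply: submx_trans (submxMl _ _) _; rewrite eq_row_base.
pose G i u := B i (enum_rank u).
have HB : forall i u, B i (enum_rank u) = G i u by [].
exists G; split.
  move=> i; apply/KC_vecP; rewrite -(mx_rowvec HB) -row_mul.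
  by move/sub_kermxP: BK => ->; rewrite row0.
by apply/(mx_indep HB); rewrite -row_leq_rank rB.
Qed.

End LA.
Arguments degR {R T} e u.
Arguments Madj {R T} e.
Arguments Mdeg {R T} e.


Lemma rank_diag (F : fieldType) n (d : 'rV[F]_n) :
  \rank (diag_mx d) = (\sum_(i < n) nat_of_bool (d ord0 i != 0%R))%N.
Proof.
elim: n d => [|n IH] d.
  by rewrite big_ord0; apply/eqP; rewrite -leqn0 rank_leq_row.
suff H : forall d : 'rV[F]_(1 + n), \rank (diag_mx d) = (\sum_(i < 1 + n) nat_of_bool (d ord0 i != 0%R))%N.
  exact: H.
move=> {}d; rewrite -[d]hsubmxK.
rewrite diag_mx_row rank_diag_block_mx IH.
rewrite big_split_ord /=.
congr (_ + _)%N.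
  rewrite big_ord1 row_mxEl rank_rV; congr nat_of_bool.
  apply/idP/idP.
    apply: contraNN => /eqP H; apply/eqP/matrixP => i j.
    rewrite !ord1 !mxE /= mulr1n; rewrite mxE in H; exact: H.
  apply: contraNN => /eqP H; apply/eqP.
  by move/matrixP: H => /(_ 0 0); rewrite !mxE eqxx mulr1n.
by apply: eq_bigr => i _; rewrite row_mxEr.
Qed.

Lemma rank_unitl (F : fieldType) n m (U : 'M[F]_n) (X : 'M[F]_(n, m)) :
  U \in unitmx -> \rank (U *m X) = \rank X.
Proof.
move=> Hu; rewrite -mxrank_tr trmx_mul mxrankMfree ?mxrank_tr //.
by rewrite row_free_unit unitmx_tr.
Qed.

Lemma rank_unitr (F : fieldType) n m (U : 'M[F]_n) (X : 'M[F]_(m, n)) :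
  U \in unitmx -> \rank (X *m U) = \rank X.
Proof. by move=> Hu; rewrite mxrankMfree // row_free_unit. Qed.

Section Spec.
Variables (R : realType) (T : finType) (e : rel T).
Hypothesis esym : symmetric e.
Hypothesis hdeg : forall u, exists v, e u v.

Lemma degR_ge1 u : 1 <= degR e u :> R.
Proof.
have [v huv] := hdeg u.
rewrite /degR (bigD1 v) //= lerDl; apply: sumr_ge0 => i _; exact: ler01.
Qed.

Lemma degR_gt0 u : 0 < degR e u :> R.
Proof. exact: lt_le_trans ltr01 (degR_ge1 u). Qed.

Let sq u : R := Num.sqrt (degR e u).
Lemma sq_gt0 u : 0 < sq u. Proof. by rewrite sqrtr_gt0 degR_gt0. Qed.

Definition Sq : 'M[R]_#|T| := diag_mx (\row_i (sq (ev i))^-1).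
Definition Sqi : 'M[R]_#|T| := diag_mx (\row_i sq (ev i)).
Definition Ssym := Sq *m Madj e *m Sq.

Lemma Sq_unit : Sq \in unitmx.
Proof.
have : Sq *m Sqi = 1%:M.
  rewrite mulmx_diag -diag_const_mx; congr diag_mx; apply/rowP => j.
  by rewrite !mxE mulVf // gt_eqF // sq_gt0.
by case/mulmx1_unit.
Qed.

Lemma Sq_deg : Sq *m Mdeg e *m Sq = 1%:M.
Proof.
rewrite /Mdeg !mulmx_diag -diag_const_mx; congr diag_mx; apply/rowP => j.
rewrite !mxE; have := sq_gt0 (ev j); rewrite /sq => h.
have hd : degR e (ev j) = Num.sqrt (degR e (ev j)) ^+ 2 :> R.
  by rewrite sqr_sqrtr // ltW // degR_gt0.
rewrite [X in _ * X * _]hd; field; by rewrite gt_eqF.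
Qed.

Lemma rank_MK c : \rank (MK e c) = \rank (Ssym - c%:M).
Proof.
have -> : Ssym - c%:M = Sq *m MK e c *m Sq.
  rewrite /MK mulmxBr mulmxBl -scalemxAr -scalemxAl Sq_deg scalemx1 //.
by rewrite rank_unitr ?Sq_unit // rank_unitl // Sq_unit.
Qed.

Lemma Ssym_sym : Ssym^T = Ssym.
Proof.
rewrite /Ssym !trmx_mul /Sq tr_diag_mx mulmxA; congr (_ *m _ *m _).
by apply/matrixP => i j; rewrite !mxE esym.
Qed.


Lemma count_map_ord n (f : 'I_n -> R) c :
  count_mem c [seq f i | i <- enum 'I_n] = (\sum_(i < n) nat_of_bool (f i == c))%N.
Proof.
rewrite count_map -sum1_count big_enum_cond /= big_mkcond /=.
by apply: eq_bigr => i _; rewrite eq_sym; case: (f i == c).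
Qed.

Lemma spec_count : exists r : seq R, size r = #|T| /\ forall c, dimK e c = count_mem c r.
Proof.
pose phi := real_complex R.
pose SC := map_mx phi Ssym.
have Hsym : SC \is symmetricmx.
  apply/is_hermitianmxP; rewrite expr0 scale1r map_mx_id // /SC map_trmx.
  by rewrite Ssym_sym.
have Hreal : SC \is a mxOver Num.real.
  by apply/mxOverP => i j; rewrite mxE /phi /= complex_real.
have Hh := realsym_hermsym Hsym Hreal.
have Hn := hermitian_normalmx Hh.
have /mxOverP Hdr := hermitian_spectral_diag_real Hh.
have /orthomx_spectralP E := Hn.
set P := spectralmx SC in E; set dd := spectral_diag SC in E Hdr.
have Pu : P \in unitmx by exact: spectral_unit.
exists [seq complex.Re (dd ord0 i) | i <- enum 'I_#|T|]; split.
  by rewrite size_map size_enum_ord.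
move=> c; rewrite count_map_ord /dimK rank_MK -(mxrank_map phi) map_mxB map_scalar_mx.
have -> : SC - (phi c)%:M = invmx P *m (diag_mx dd - (phi c)%:M) *m P.
  rewrite mulmxBr mulmxBl -E mul_mx_scalar -scalemxAl mulVmx // scalemx1 //.
rewrite rank_unitr // rank_unitl ?unitmx_inv //.
have -> : diag_mx dd - (phi c)%:M = diag_mx (\row_i (dd ord0 i - phi c)).
  apply/matrixP => i j; rewrite !mxE; case: (i =P j) => [->|_] /=.
    by rewrite !mulr1n.
  by rewrite !mulr0n subr0.
rewrite rank_diag.
under eq_bigr => i _ do rewrite !mxE subr_eq0 -(RRe_real (Hdr ord0 i)) (inj_eq (@complexI _)).
apply/eqP; rewrite -(eqn_add2r (\sum_(i < #|T|) nat_of_bool (complex.Re (dd ord0 i) != c))%N).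
rewrite subnK; last first.
  apply: (@leq_trans (\sum_(i < #|T|) 1)%N); first exact: leq_sum (fun i _ => leq_b1 _).
  by rewrite sum1_card card_ord.
by rewrite -big_split /=; under eq_bigr do rewrite addnC addn_negb; rewrite sum1_card card_ord.
Qed.

End Spec.

Section Graph.
Variables (R : realType) (T : finType) (e : rel T).
Hypothesis e_sym : symmetric e.
Hypothesis hdeg : forall u, exists v, e u v.
Hypothesis conn : forall u v, connect e u v.
Variable col : T -> bool.
Hypothesis hcol : forall u v, e u v -> col u != col v.

Lemma exists_max (F : T -> R) (u0 : T) : exists u, forall v, F v <= F u.
Proof.
case: (@arg_maxP _ R _ u0 predT F isT) => u _ H; exists u => v; exact: H.
Qed.

Lemma KC_sum (c : R) (F : T -> R) u : KC e c F -> \sum_(v | e u v) F v = c * degR e u * F u.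
Proof.
move=> /(_ u); rewrite sumrB => /eqP; rewrite subr_eq0 => /eqP ->.
by rewrite /degR mulr_sumr mulr_suml; apply: eq_bigr => v _; rewrite mulr1.
Qed.

Lemma KC1_nbmax (F : T -> R) x : KC e 1 F -> (forall v, F v <= F x) ->
  forall v, e x v -> F v = F x.
Proof.
move=> /(_ x) H Hx v hv.
have H' : \sum_(w | e x w) (F x - F w) = 0.
  apply: (@etrans _ _ (- \sum_(w | e x w) (F w - 1 * F x))); last by rewrite H oppr0.
  rewrite -sumrN; apply: eq_bigr => w _; rewrite mul1r opprB //.
have Hp : forall w, e x w -> 0 <= F x - F w by move=> w _; rewrite subr_ge0.
have := psumr_eq0P Hp H' hv.
by move/eqP; rewrite subr_eq0 => /eqP.
Qed.

Lemma KC1_const (F : T -> R) : KC e 1 F -> forall u v, F u = F v.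
Proof.
move=> HK u v.
have [x Hx] := exists_max F u.
have cl : closed_mem e (mem [pred y | F y == F x]).
  move=> y z hyz /=; apply/idP/idP => /eqP H.
    apply/eqP; rewrite -H; apply: (KC1_nbmax HK) => // w; rewrite H; exact: Hx.
  apply/eqP; rewrite -H; apply: (KC1_nbmax HK); last by rewrite e_sym.
  by move=> w; rewrite H; exact: Hx.
have hu := closed_connect cl (conn x u).
have hv := closed_connect cl (conn x v).
rewrite !inE eqxx in hu hv.
by move/esym/eqP: hu => ->; move/esym/eqP: hv => ->.
Qed.

Lemma KC_bound (c : R) (F : T -> R) : KC e c F -> (exists u, F u != 0) -> `|c| <= 1.
Proof.
move=> HK [u0 Hu0].
have [x Hx] := exists_max (fun u => `|F u|) u0.
have Fx : 0 < `|F x| by apply: lt_le_trans (Hx u0); rewrite normr_gt0.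
have Hd : 0 < degR e x :> R by exact: degR_gt0.
have H1 : `|c| * (degR e x * `|F x|) <= 1 * (degR e x * `|F x|).
  have -> : `|c| * (degR e x * `|F x|) = `|\sum_(v | e x v) F v|.
    by rewrite (KC_sum x HK) !normrM (gtr0_norm Hd); ring.
  apply: le_trans (ler_norm_sum _ _ _) _.
  rewrite mul1r /degR mulr_suml; apply: ler_sum => v _; rewrite mul1r; exact: Hx.
by rewrite ler_pM2r ?mulr_gt0 // in H1.
Qed.

Lemma dimK_ge1 (c : R) : (1 <= dimK e c)%N -> exists F, KC e c F /\ exists u, F u != 0.
Proof.
move/(LA_mult e_sym) => [G [HK Hi]]; exists (G ord0); split => //.
have [//|H] := pselect (exists u, G ord0 u != 0).
have H' : forall u, G ord0 u = 0.
  by move=> u; apply/eqP/negPn/negP => hu; apply: H; exists u.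
have : (1 : R) = 0 by apply: (Hi (fun _ => 1) _ ord0) => u; rewrite big_ord1 mul1r H'.
by move/eqP; rewrite oner_eq0.
Qed.

Lemma dim_one (c : R) (z : T -> R) : KC e c z -> (exists u, z u != 0) ->
  (forall F, KC e c F -> exists k, forall u, F u = k * z u) -> dimK e c = 1%N.
Proof.
move=> Hz [u0 Hu0] Hall.
have H1 : (1 <= dimK e c)%N.
  apply/(LA_mult e_sym); exists (fun _ => z); split => // a Ha i.
  have := Ha u0; rewrite big_ord1 => /eqP; rewrite mulf_eq0 (negPf Hu0) orbF => /eqP.
  by rewrite (ord1 i).
apply/eqP; rewrite eqn_leq H1 andbT leqNgt; apply/negP.
move/(LA_mult e_sym) => [G [HK Hi]].
have [k0 Hk0] := Hall _ (HK ord0).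
have [k1 Hk1] := Hall _ (HK (lift ord0 ord0)).
have Hs : forall a : 'I_2 -> R, forall u, \sum_i a i * G i u = (a ord0 * k0 + a (lift ord0 ord0) * k1) * z u.
  by move=> a u; rewrite !big_ord_recl big_ord0 addr0 Hk0 Hk1; ring.
have k0z : k0 = 0.
  have : (if lift ord0 ord0 == ord0 :> 'I_2 then k1 else - k0) = 0.
    by apply: (Hi (fun i => if i == ord0 then k1 else - k0) _ (lift ord0 ord0)) => u; rewrite Hs /=; ring.
  by rewrite /= => /eqP; rewrite oppr_eq0 => /eqP.
have : (if ord0 == ord0 :> 'I_2 then 1 else 0 : R) = 0.
  by apply: (Hi (fun i => if i == ord0 then 1 else 0) _ ord0) => u; rewrite Hs /= k0z; ring.
by rewrite eqxx => /eqP; rewrite oner_eq0.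
Qed.

Definition sgn u : R := if col u then 1 else -1.

Lemma sgn_nb u v : e u v -> sgn v = - sgn u.
Proof.
move=> /hcol; rewrite /sgn; case: (col u); case: (col v) => //= _; by rewrite ?opprK.
Qed.

Lemma sgn_sq u : sgn u * sgn u = 1.
Proof. by rewrite /sgn; case: (col u); rewrite ?mulr1 ?mulrNN ?mulr1. Qed.

Lemma dimK1 : T -> dimK e (1 : R) = 1%N.
Proof.
move=> u0; apply: (@dim_one 1 (fun _ => 1)).
- by move=> u; apply: big1 => v _; rewrite mulr1 subrr.
- by exists u0; rewrite oner_eq0.
- by move=> F HF; exists (F u0) => u; rewrite mulr1 (KC1_const HF u u0).
Qed.

Lemma dimKN1 : T -> dimK e (-1 : R) = 1%N.
Proof.
move=> u0; apply: (@dim_one (-1) sgn).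
- move=> u; apply: big1 => v huv; rewrite (sgn_nb huv); ring.
- by exists u0; rewrite /sgn; case: (col u0); rewrite ?oppr_eq0 oner_eq0.
move=> F HF; exists (sgn u0 * F u0) => u.
have HK : KC e 1 (fun u => sgn u * F u).
  move=> w; have H := HF w.
  apply: (@etrans _ _ (- sgn w * \sum_(v | e w v) (F v - (-1) * F w))); last by rewrite H mulr0.
  rewrite mulr_sumr; apply: eq_bigr => v hv; rewrite (sgn_nb hv); ring.
have := KC1_const HK u u0 => <-.
by rewrite mulrC mulrA sgn_sq mul1r.
Qed.

Lemma count_open : (1 < #|T|)%N -> exists r : seq R,
  [/\ size r = (#|T| - 2)%N, (forall c, c \in r -> -1 < c < 1) &
      (forall c, -1 < c < 1 -> dimK e c = count_mem c r)].
Proof.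
move=> hT.
have [u0 _] : exists u0 : T, true.
  by case/card_gt1P: hT => x [y _]; exists x.
have [r0 [Hs Hc]] := @spec_count R T e e_sym hdeg.
pose P := fun c : R => -1 < c < 1.
exists [seq c <- r0 | P c]; split.
- have Hall : {in r0, forall c, ~~ P c = ((c == 1) || (c == -1))}.
    move=> c hc.
    have : (1 <= dimK e c)%N by rewrite Hc -has_count has_pred1.
    move/dimK_ge1 => [F [HF HF0]].
    have := KC_bound HF HF0; rewrite ler_norml => /andP[h1 h2].
    rewrite /P (lt_neqAle (-1)) (lt_neqAle c) h1 h2 !andbT negb_and !negbK orbC.
    by rewrite [-1 == c]eq_sym.
  rewrite size_filter.
  have HC : count (predC P) r0 = 2%N.
    rewrite (eq_in_count Hall).
    have := count_predUI (pred1 1) (pred1 (-1)) r0.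
    rewrite -!Hc dimK1 // dimKN1 // (@eq_count _ (predI (pred1 1) (pred1 (-1))) pred0); last first.
      move=> x /=; apply/negbTE/negP => /andP[/eqP -> /eqP]; lra.
    by rewrite count_pred0 addn0.
  by rewrite -Hs -(count_predC P r0) HC addnK.
- by move=> c; rewrite mem_filter => /andP[].
- move=> c hc; rewrite Hc count_filter; apply: eq_count => x /=.
  by rewrite /P; case: eqP => // ->; rewrite hc.
Qed.

End Graph.

Section Ana.
Variable R : realType.

Lemma d_lin (k x : R) : is_derive x 1 (fun y : R => k * y) k.
Proof.
have h : is_derive x (1 : R) (k *: (@id R)) (k *: (1 : R)) by apply: is_deriveZ.
have e1 : k *: (1 : R) = k by rewrite /GRing.scale /= mulr1.
rewrite e1 in h; exact: h.
Qed.

Lemma d_sink (k x : R) : is_derive x 1 (fun y => sin (k * y)) (k * cos (k * x)).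
Proof.
have := is_derive1_comp (f := sin) (is_derive_sin (k * x)) (d_lin k x).
by rewrite mulrC.
Qed.

Lemma d_cosk (k x : R) : is_derive x 1 (fun y => cos (k * y)) (- k * sin (k * x)).
Proof.
have := is_derive1_comp (f := cos) (is_derive_cos (k * x)) (d_lin k x).
by rewrite mulrC mulNr mulrN.
Qed.


Lemma der_able (f : R -> R) (x df : R) : is_derive x 1 f df -> derivable f x 1.
Proof. by move=> H; apply: (@ex_derive _ _ _ _ _ _ _ H). Qed.

Definition phi (k a b : R) : R -> R := fun y => a * cos (k * y) + b * sin (k * y).

Lemma d_phi (k a b x : R) : is_derive x 1 (phi k a b) (a * (- k * sin (k * x)) + b * (k * cos (k * x))).
Proof.
have := is_deriveD (is_deriveZ a (d_cosk k x)) (is_deriveZ b (d_sink k x)).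
by [].
Qed.

Lemma cont_phi (k a b : R) : continuous (phi k a b).
Proof.
move=> x; apply/differentiable_continuous/derivable1_diffP.
exact: der_able (d_phi k a b x).
Qed.

Lemma deriv0_cst (W : R -> R) : (forall x : R, 0 < x < 1 -> is_derive x 1 W 0) ->
  forall x y : R, 0 < x < 1 -> 0 < y < 1 -> W x = W y.
Proof.
move=> HW.
suff H : forall x y : R, 0 < x < 1 -> 0 < y < 1 -> x <= y -> W x = W y.
  move=> x y hx hy; case: (leP x y) => hxy; first exact: H.
  by apply/esym/H => //; apply: ltW.
move=> x y hx hy hxy.
have hin : forall z, x <= z <= y -> 0 < z < 1.
  move=> z /andP[h1 h2]; apply/andP; split.
    exact: lt_le_trans (proj1 (andP hx)) h1.
  exact: le_lt_trans h2 (proj2 (andP hy)).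
have h1 : forall z, z \in `]x, y[ -> is_derive z 1 W ((fun _ => 0) z).
  move=> z; rewrite in_itv /= => /andP[h1 h2]; apply: HW; apply: hin.
  by rewrite !ltW.
have h2 : {within `[x, y], continuous W}.
  apply: derivable_within_continuous => z; rewrite in_itv /= => hz.
  exact: der_able (HW z (hin z hz)).
have [c _ Hc] := @MVT_segment R W (fun _ => 0) x y hxy h1 h2.
by move: Hc; rewrite mul0r => /eqP; rewrite subr_eq0 => /eqP.
Qed.


Lemma ext_end (g h : R -> R) : {within `[0, 1], continuous g} -> continuous h ->
  (forall x, 0 < x < 1 -> g x = h x) -> forall x, 0 <= x <= 1 -> g x = h x.
Proof.
move=> gc hc hin x hx.
have [_ hl hr] := (continuous_within_itvP g (@ltr01 R)).1 gc.
have [->|x0] := eqVneq x 0.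
  apply: (cvg_unique (@Rhausdorff R) (F := g @ 0^'+)) hl _.
  apply: cvg_trans (cvg_at_right_filter (hc 0)).
  apply: near_eq_cvg; near=> y; apply/esym/hin; apply/andP; split.
    by near: y; apply: nbhs_right_gt.
  by near: y; apply: nbhs_right_lt; exact: ltr01.
have [->|x1] := eqVneq x 1.
  apply: (cvg_unique (@Rhausdorff R) (F := g @ 1^'-)) hr _.
  apply: cvg_trans (cvg_at_left_filter (hc 1)).
  apply: near_eq_cvg; near=> y; apply/esym/hin; apply/andP; split.
    by near: y; apply: nbhs_left_gt; exact: ltr01.
  by near: y; apply: nbhs_left_lt.
apply: hin; move/andP: hx => [h0 h1]; apply/andP; split.
  by rewrite lt_neqAle eq_sym x0.
by rewrite lt_neqAle x1.
Unshelve. all: by end_near.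
Qed.

Lemma ode_sol (k : R) (g : R -> R) : 0 < k ->
  {within `[0, 1], continuous g} ->
  (forall x, 0 < x < 1 -> [/\ derivable g x 1, derivable (derive1 g) x 1 &
       - derive1 (derive1 g) x = k ^+ 2 * g x]) ->
  exists a b, forall x, 0 <= x <= 1 -> g x = phi k a b x.
Proof.
move=> k0 gc hg.
set g1 := derive1 g; set g2 := derive1 g1.
have dg : forall x : R, 0 < x < 1 -> is_derive x 1 g (g1 x).
  by move=> x hx; case: (hg x hx) => h _ _; rewrite /g1 derive1E; exact: derivableP.
have dg1 : forall x : R, 0 < x < 1 -> is_derive x 1 g1 (g2 x).
  by move=> x hx; case: (hg x hx) => _ h _; rewrite /g2 derive1E; exact: derivableP.
have hk : forall x : R, 0 < x < 1 -> g2 x = - (k ^+ 2 * g x).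
  by move=> x hx; case: (hg x hx) => _ _ <-; rewrite opprK.
pose S := fun y : R => sin (k * y). pose C := fun y : R => cos (k * y).
pose W := g1 * S - (k *: g) * C.
pose V := g1 * C + (k *: g) * S.
have dW : forall x : R, 0 < x < 1 -> is_derive x 1 W 0.
  move=> x hx.
  have := is_deriveB (is_deriveM (dg1 x hx) (d_sink k x)) (is_deriveM (is_deriveZ k (dg x hx)) (d_cosk k x)).
  move=> H; apply: is_derive_eq H _.
  rewrite hk // /S /C /=. rewrite /GRing.scale /=. ring.
have dV : forall x : R, 0 < x < 1 -> is_derive x 1 V 0.
  move=> x hx.
  have := is_deriveD (is_deriveM (dg1 x hx) (d_cosk k x)) (is_deriveM (is_deriveZ k (dg x hx)) (d_sink k x)).
  move=> H; apply: is_derive_eq H _.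
  rewrite hk // /S /C /=. rewrite /GRing.scale /=. ring.
have hh1 : (0 : R) < 1 / 2 by lra.
have hh2 : (1 / 2 : R) < 1 by lra.
have hh : (0 : R) < (1 / 2 : R) < 1 by rewrite hh1 hh2.
set w0 := W (1 / 2); set v0 := V (1 / 2).
have k0' : k != 0 by exact: lt0r_neq0.
exists (- w0 / k), (v0 / k).
apply: ext_end => //; first exact: cont_phi.
move=> x hx.
have h1 := deriv0_cst dW hx hh; have h2 := deriv0_cst dV hx hh.
rewrite -/w0 in h1; rewrite -/v0 in h2.
have hcs := cos2Dsin2 (k * x).
have e1 : k * g x = v0 * sin (k * x) - w0 * cos (k * x).
  rewrite -h1 -h2 /W /V /S /C /= /GRing.scale /=.
  rewrite -[LHS]mulr1 -hcs !fctE /= /GRing.scale /=; ring.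
apply: (mulfI k0'); rewrite e1 /phi; field; exact: k0'.
Qed.

End Ana.

Section QGA.
Variables (R : realType) (T : finType) (e : rel T).
Hypothesis e_sym : symmetric e.
Hypothesis hdeg : forall u, exists v, e u v.
Variable k : R.
Hypothesis k0 : 0 < k.
Hypothesis sk : sin k != 0.

Definition nb u : T := xchoose (hdeg u).
Lemma nbP u : e u (nb u). Proof. exact: xchooseP. Qed.

Definition vval (f : gfun R T) : T -> R := fun u => f u (nb u) 0.
Definition bcoef (F : T -> R) u v := (F v - F u * cos k) / sin k.
Definition ext (F : T -> R) : gfun R T := fun u v => phi k (F u) (bcoef F u v).

Lemma phi0 a b : phi k a b 0 = a.
Proof. by rewrite /phi mulr0 cos0 sin0 mulr1 mulr0 addr0. Qed.

Lemma phi1 a b : phi k a b 1 = a * cos k + b * sin k.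
Proof. by rewrite /phi mulr1. Qed.

Lemma ext0 F u v : ext F u v 0 = F u.
Proof. exact: phi0. Qed.

Lemma outder_phi (f : R -> R) a b : (forall x, 0 <= x <= 1 -> f x = phi k a b x) ->
  (fun h => (f h - f 0) / h) @ 0^'+ --> b * k.
Proof.
move=> hf.
have D := d_phi k a b 0.
have L : (fun h : R => h^-1 *: ((phi k a b \o shift 0) (h *: 1) - phi k a b 0)) @ 0^' --> b * k.
  have -> : b * k = (a * (- k * sin (k * 0)) + b * (k * cos (k * 0))).
    by rewrite mulr0 sin0 cos0; ring.
  rewrite -(@derive_val _ _ _ _ _ _ _ D).
  exact: (@ex_derive _ _ _ _ _ _ _ D).
have L2 := cvg_dnbhs_at_right L.
apply: cvg_trans L2; apply: near_eq_cvg; near=> h.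
have h0 : 0 < h by near: h; apply: nbhs_right_gt.
have h1 : h < 1 by near: h; apply: nbhs_right_lt; exact: ltr01.
rewrite /= hf; last by rewrite !ltW.
rewrite hf; last by rewrite lexx ler01.
by rewrite addr0 /GRing.scale /= mulr1 mulrC.
Unshelve. all: by end_near.
Qed.

Lemma outder_uniq (f : gfun R T) u v a b d : (forall x, 0 <= x <= 1 -> f u v x = phi k a b x) ->
  has_outder f u v d -> d = b * k.
Proof.
move=> hf hd; have := outder_phi hf.
exact: (cvg_unique (@Rhausdorff R) (F := (fun h => (f u v h - f u v 0) / h) @ 0^'+)) hd.
Qed.


Lemma eig_repr (f : gfun R T) : in_eigspace e (k ^+ 2) f ->
  forall u v, e u v -> forall x, 0 <= x <= 1 -> f u v x = ext (vval f) u v x.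
Proof.
case=> hcons hcont hder hvert _ u v huv.
have [a [b hab]] := ode_sol k0 (hcont u v huv) (hder u v huv).
have ha : a = vval f u.
  rewrite /vval -(hvert u v (nb u) huv (nbP u)) (hab 0) ?phi0 //.
  by rewrite lexx ler01.
have hb : b = bcoef (vval f) u v.
  have : f u v 1 = vval f v.
    rewrite (hcons u v huv 1) ?subrr; last by rewrite lexx ler01.
    by rewrite /vval (hvert v u (nb v)) // ?nbP // e_sym.
  have h01 : (0:R) <= (1:R) <= 1 by rewrite ler01 lexx.
  rewrite (hab 1 h01) phi1 => hv; rewrite /bcoef -hv -ha; field; exact: sk.
by move=> x hx; rewrite hab // /ext -ha -hb.
Qed.

Lemma eig_to_KC (f : gfun R T) : in_eigspace e (k ^+ 2) f -> KC e (cos k) (vval f).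
Proof.
move=> hf; have hr := eig_repr hf.
case: hf => _ _ _ _ [d [hd hs]] u.
have H : forall v, e u v -> d u v = bcoef (vval f) u v * k.
  by move=> v huv; apply: (outder_uniq (hr u v huv)); exact: hd.
have := hs u; rewrite (eq_bigr (fun v => bcoef (vval f) u v * k) H) -mulr_suml => /eqP; rewrite mulf_eq0 (negPf (lt0r_neq0 k0)) orbF.
rewrite /bcoef -mulr_suml mulf_eq0 invr_eq0 (negPf sk) orbF => /eqP H0.
by apply: etrans H0; apply: eq_bigr => v _; rewrite mulrC.
Qed.

Lemma derive1_phi a b : derive1 (phi k a b) = phi k (b * k) (- (a * k)).
Proof.
apply/funext => x; rewrite derive1E (@derive_val _ _ _ _ _ _ _ (d_phi k a b x)) /phi.
ring.
Qed.

Lemma ext_eig (F : T -> R) : KC e (cos k) F -> in_eigspace e (k ^+ 2) (ext F).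
Proof.
move=> hK; split.
- move=> u v huv x _; rewrite /ext /phi /bcoef mulrBr mulr1 cosB sinB.
  apply/eqP; rewrite -subr_eq0; apply/eqP.
  have hc := cos2Dsin2 k.
  have -> : F u * cos (k * x) + (F v - F u * cos k) / sin k * sin (k * x) -
    (F v * (cos k * cos (k * x) + sin k * sin (k * x)) +
     (F u - F v * cos k) / sin k * (sin k * cos (k * x) - cos k * sin (k * x))) =
    F v * sin (k * x) / sin k * (1 - (cos k ^+ 2 + sin k ^+ 2)).
    by field.
  by rewrite hc subrr mulr0.
- move=> u v huv; apply: continuous_subspaceT => x; exact: cont_phi.
- move=> u v huv x hx; rewrite /ext !derive1_phi; split.
  + exact: der_able (d_phi _ _ _ x).
  + exact: der_able (d_phi _ _ _ x).
  + rewrite /phi; ring.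
- by move=> u v w _ _; rewrite !ext0.
exists (fun u v => bcoef F u v * k); split.
  move=> u v huv; rewrite /has_outder.
  by apply: (outder_phi (f := ext F u v) (a := F u)) => x _.
move=> u; rewrite -mulr_suml /bcoef -mulr_suml.
have -> : \sum_(v | e u v) (F v - F u * cos k) = 0.
  by apply: etrans (hK u); apply: eq_bigr => v _; rewrite mulrC.
by rewrite mul0r mul0r.
Qed.

End QGA.

Section QGB.
Variables (R : realType) (T : finType) (e : rel T).
Hypothesis e_sym : symmetric e.
Hypothesis hdeg : forall u, exists v, e u v.
Variable k : R.
Hypothesis k0 : 0 < k.
Hypothesis sk : sin k != 0.

Definition Pm m := exists F : 'I_m -> gfun R T,
  (forall i, in_eigspace e (k ^+ 2) (F i)) /\ lin_indep e F.

Lemma ext_lin m (a : 'I_m -> R) (G : 'I_m -> T -> R) u v x :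
  \sum_i a i * ext k (G i) u v x = ext k (fun w => \sum_i a i * G i w) u v x.
Proof.
rewrite /ext /phi /bcoef.
rewrite (eq_bigr (fun i => (a i * G i u) * cos (k * x) +
   ((a i * G i v) * (sin (k * x) / sin k) - (a i * G i u) * (cos k * sin (k * x) / sin k)))); last first.
  by move=> i _; field; exact: sk.
rewrite big_split sumrB /= -!mulr_suml; field; exact: sk.
Qed.

Lemma Pm_iff m : Pm m <-> (m <= dimK e (cos k))%N.
Proof.
split.
  move=> [F [hF hi]]; apply/(LA_mult e_sym).
  exists (fun i => vval hdeg (F i)); split.
    by move=> i; apply: eig_to_KC => //; exact: hF.
  move=> a ha; apply: hi => u v x huv hx.
  rewrite (eq_bigr (fun i => a i * ext k (vval hdeg (F i)) u v x)); last first.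
    by move=> i _; rewrite (eig_repr e_sym hdeg k0 sk (hF i)).
  rewrite ext_lin.
  have -> : (fun w => \sum_i a i * vval hdeg (F i) w) = (fun _ => 0).
    by apply/funext => w; exact: ha.
  by rewrite /ext /phi /bcoef; ring.
move/(LA_mult e_sym) => [G [hK hi]].
exists (fun i => ext k (G i)); split.
  by move=> i; apply: ext_eig => //; exact: hK.
move=> a ha; apply: hi => u.
have h00 : (0:R) <= (0:R) <= 1 by rewrite lexx ler01.
have := ha u (nb hdeg u) 0 (nbP hdeg u) h00.
by under eq_bigr do rewrite ext0.
Qed.

Lemma mult_iff m : qg_mult e (k ^+ 2) m <-> m = dimK e (cos k).
Proof.
split.
  move=> [h1 h2]; have := (Pm_iff m).1 h1 => hm.
  apply/eqP; rewrite eqn_leq hm /= leqNgt; apply/negP => /(Pm_iff m.+1).2 [F [hF hi]].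
  exact: (h2 F hF hi).
move=> ->; split; first exact/(Pm_iff _).2.
move=> F hF hi; have : Pm (dimK e (cos k)).+1 by exists F.
by move/(Pm_iff _).1; rewrite ltnn.
Qed.

Lemma eig_iff : qg_eigenvalue e (k ^+ 2) <-> (1 <= dimK e (cos k))%N.
Proof.
rewrite -Pm_iff; split.
  move=> [f [hf [u [v [x [huv hx hnz]]]]]]; exists (fun _ => f); split => // a ha i.
  have := ha u v x huv hx; rewrite big_ord1 => /eqP.
  by rewrite mulf_eq0 (negPf hnz) orbF => /eqP; rewrite (ord1 i).
move=> [F [hF hi]]; exists (F ord0); split => //.
have [//|hn] := pselect (gnonzero e (F ord0)).
have : (1 : R) = 0.
  apply: (hi (fun _ => 1) _ ord0) => u v x huv hx; rewrite big_ord1 mul1r.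
  apply/eqP/negPn/negP => hz; apply: hn; exists u, v, x; split => //.
by move/eqP; rewrite oner_eq0.
Qed.

End QGB.

Section Final.
Variable R : realType.

Lemma cos_open (y : R) : 0 < y < pi -> -1 < cos y < 1.
Proof.
move=> /andP[h0 h1].
have hy : y \in `[0, pi] by rewrite in_itv /= !ltW.
have h0p : (0 : R) \in `[0, pi] by rewrite in_itv /= lexx pi_ge0.
have hpp : (pi : R) \in `[0, pi] by rewrite in_itv /= lexx pi_ge0.
apply/andP; split; rewrite lt_neqAle ?cos_geN1 ?cos_le1 andbT.
  apply/eqP => hc; have := cos_inj hpp hy; rewrite cospi hc => /(_ erefl) hy'.
  by move: h1; rewrite hy' ltxx.
apply/eqP => hc; have := cos_inj hy h0p; rewrite cos0 hc => /(_ erefl) hy'.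
by move: h0; rewrite hy' ltxx.
Qed.

Lemma two_pi_cos (y : R) : cos (2 * pi - y) = cos y.
Proof.
by rewrite cosB mulr_natl cos2pi sin2pi mul1r mul0r addr0.
Qed.

Lemma two_pi_sin (y : R) : sin (2 * pi - y) = - sin y.
Proof.
by rewrite sinB mulr_natl cos2pi sin2pi mul1r mul0r sub0r.
Qed.

Lemma sum_undup_count (r : seq R) : (\sum_(c <- undup r) count_mem c r)%N = size r.
Proof.
rewrite -(perm_size (perm_count_undup r)) size_flatten /shape -map_comp sumnE big_map.
by apply: eq_bigr => c _; rewrite /= size_nseq.
Qed.

Lemma sqr_inj_pos (x y : R) : 0 <= x -> 0 <= y -> x ^+ 2 = y ^+ 2 -> x = y.
Proof.
move=> hx hy h; apply/eqP; rewrite -(eqrXn2 (n := 2)) ?h //.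
Qed.

End Final.

Section Gen.
Variables (R : realType) (T : finType) (e : rel T).
Hypothesis e_sym : symmetric e.
Hypothesis hdeg : forall u, exists v, e u v.
Hypothesis conn : forall u v, connect e u v.
Variable col : T -> bool.
Hypothesis hcol : forall u v, e u v -> col u != col v.
Hypothesis hT : (1 < #|T|)%N.

Lemma count_gen (a b : R) (g : R -> R) :
  (forall c, -1 < c < 1 -> [/\ 0 < g c, sin (g c) != 0, cos (g c) = c & a < g c ^+ 2 < b]) ->
  (forall x, a < x < b -> exists c, -1 < c < 1 /\ x = g c ^+ 2) ->
  qg_count e a b (#|T| - 2).
Proof.
move=> H1 H2.
have [r [Hs Hin Hc]] := count_open R e_sym hdeg conn hcol hT.
exists [seq (g c ^+ 2, count_mem c r) | c <- undup r]; split.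
- rewrite -map_comp map_inj_in_uniq ?undup_uniq //.
  move=> c c' /=; rewrite !mem_undup => /Hin hc /Hin hc' h.
  have [g0 _ cg _] := H1 c hc; have [g0' _ cg' _] := H1 c' hc'.
  by rewrite -cg -cg' (sqr_inj_pos (ltW g0) (ltW g0') h).
- move=> x; split.
    move=> [hx he]; have [c [hc hxc]] := H2 x hx; rewrite hxc in he *.
    have [g0 sg cg _] := H1 c hc.
    have := (eig_iff e_sym hdeg g0 sg).1 he; rewrite cg Hc // -has_count has_pred1 => hcr.
    rewrite -map_comp; apply/mapP; exists c; by rewrite ?mem_undup.
  rewrite -map_comp => /mapP [c]; rewrite mem_undup => hcr ->.
  have hc := Hin c hcr; have [g0 sg cg hab] := H1 c hc; split => //.
  by apply: (eig_iff e_sym hdeg g0 sg).2; rewrite cg Hc // -has_count has_pred1.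
- move=> p /mapP [c]; rewrite mem_undup => hcr ->.
  have hc := Hin c hcr; have [g0 sg cg hab] := H1 c hc.
  by apply: (mult_iff e_sym hdeg g0 sg _).2; rewrite cg Hc.
- by rewrite big_map /= sum_undup_count Hs.
Qed.

End Gen.

Theorem theorem2p4 (R : realType) (T : finType) (e : rel T)
  (e_sym : symmetric e) (e_irr : irreflexive e)
  (e_conn : forall u v : T, connect e u v)
  (e_bip : exists c : T -> bool, forall u v, e u v -> c u != c v) :
  @qg_count R T e 0 (pi ^+ 2) (#|T| - 2)%N /\
  @qg_count R T e (pi ^+ 2) ((2 * pi) ^+ 2) (#|T| - 2)%N /\
  (forall lam : R, pi ^+ 2 < lam < (2 * pi) ^+ 2 -> @qg_eigenvalue R T e lam ->
     exists mu : R, [/\ 0 < mu < pi ^+ 2, @qg_eigenvalue R T e mu,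
                        lam = (2 * pi - Num.sqrt mu) ^+ 2 &
                        forall m : nat, @qg_mult R T e lam m <-> @qg_mult R T e mu m]).
Proof.
have [col hcol] := e_bip.
have pi0 : (0 : R) < pi := pi_gt0 R.
case: (leqP #|T| 1) => hT.
  have noedge : forall u v, ~~ e u v.
    move=> u v; apply/negP => huv.
    have huv' : u != v by apply/eqP => h; rewrite h e_irr in huv.
    have : (1 < #|T|)%N by apply/card_gt1P; exists u, v.
    by rewrite ltnNge hT.
  have noeig : forall lam : R, ~ qg_eigenvalue e lam.
    by move=> lam [f [_ [u [v [x [huv _ _]]]]]]; rewrite (negPf (noedge u v)) in huv.
  have sub0 : (#|T| - 2 = 0)%N by apply/eqP; rewrite subn_eq0; exact: leq_trans hT _.
  have cnt : forall a b : R, qg_count e a b (#|T| - 2).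
    move=> a b; rewrite sub0; exists [::]; split => //; last by rewrite big_nil.
    by move=> x; split => // -[_ h]; exfalso; exact: noeig h.
  split; first exact: cnt.
  split; first exact: cnt.
  by move=> lam _ h; exfalso; exact: noeig h.
have hdeg : forall u, exists v, e u v.
  move=> u.
  have [v huv] : exists v, v != u.
    case/card_gt1P: hT => x [y [_ _ hxy]].
    case: (eqVneq x u) => [hxu|hxu]; last by exists x.
    by exists y; rewrite -hxu eq_sym.
  case/connectP: (e_conn u v) => p; case: p => [/= _ hl|w p /= /andP [h _] _].
    by rewrite hl eqxx in huv.
  by exists w.
have sqrtP : forall x : R, 0 < x -> 0 < Num.sqrt x /\ Num.sqrt x ^+ 2 = x.
  by move=> x hx; split; [rewrite sqrtr_gt0 | rewrite sqr_sqrtr // ltW].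
have acosP : forall c : R, -1 < c < 1 ->
    [/\ 0 < acos c, acos c < pi, sin (acos c) != 0 & cos (acos c) = c].
  move=> c /andP[h1 h2].
  have a0 : 0 < acos c by apply: acos_gt0; rewrite ltW // h2.
  have a1 : acos c < pi by apply: acos_ltpi; rewrite h1 ltW.
  split => //.
    by apply: lt0r_neq0; apply: sin_gt0_pi; rewrite a0 a1.
  by apply: acosK; rewrite in_itv /= !ltW.
have cosKP : forall y : R, 0 < y < pi -> acos (cos y) = y.
  by move=> y /andP[h0 h1]; apply: cosK; rewrite in_itv /= !ltW.
split.
  apply: (count_gen e_sym hdeg e_conn hcol hT (g := acos)).
    move=> c hc; have [a0 a1 s0 c0] := acosP c hc; split => //.
    apply/andP; split; nra.
  move=> x /andP[h0 h1]; have [k0 hk] := sqrtP x h0.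
  have kpi : Num.sqrt x < pi by nra.
  have hk' : 0 < Num.sqrt x < pi by rewrite k0 kpi.
  exists (cos (Num.sqrt x)); split; first exact: cos_open.
  by rewrite cosKP.
split.
  apply: (count_gen e_sym hdeg e_conn hcol hT (g := fun c => 2 * pi - acos c)).
    move=> c hc; have [a0 a1 s0 c0] := acosP c hc; split.
    - nra.
    - by rewrite two_pi_sin oppr_eq0.
    - by rewrite two_pi_cos.
    - apply/andP; split; nra.
  move=> x /andP[h0 h1]; have [k0 hk] := sqrtP x (lt_trans (exprn_gt0 2 pi0) h0).
  have kpi : pi < Num.sqrt x by nra.
  have kpi2 : Num.sqrt x < 2 * pi by nra.
  have hk' : 0 < 2 * pi - Num.sqrt x < pi by apply/andP; split; nra.
  exists (cos (2 * pi - Num.sqrt x)); split; first exact: cos_open.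
  by rewrite cosKP // opprB addrC subrK.
move=> lam /andP[h0 h1] he.
have [k0 hk] := sqrtP lam (lt_trans (exprn_gt0 2 pi0) h0).
set k := Num.sqrt lam in k0 hk *.
have kpi : pi < k by nra.
have kpi2 : k < 2 * pi by nra.
set k' := 2 * pi - k.
have hk' : 0 < k' < pi by apply/andP; split; rewrite /k'; nra.
have k'0 : 0 < k' by case/andP: hk'.
have sk' : sin k' != 0 by apply: lt0r_neq0; apply: sin_gt0_pi.
have ek : k = 2 * pi - k' by rewrite /k' opprB addrC subrK.
have sk : sin k != 0 by rewrite ek two_pi_sin oppr_eq0.
have ck : cos k = cos k' by rewrite ek two_pi_cos.
exists (k' ^+ 2); split.
- apply/andP; split; nra.
- apply: (eig_iff e_sym hdeg k'0 sk').2; rewrite -ck.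
  by apply: (eig_iff e_sym hdeg k0 sk).1; rewrite hk.
- by rewrite sqrtr_sqr ger0_norm ?ltW // -ek hk.
- move=> m; rewrite -{1}hk; split.
    by move/(mult_iff e_sym hdeg k0 sk m).1 => hm; apply: (mult_iff e_sym hdeg k'0 sk' m).2; rewrite -ck.
  by move/(mult_iff e_sym hdeg k'0 sk' m).1 => hm; apply: (mult_iff e_sym hdeg k0 sk m).2; rewrite ck.
Qed.
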